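(* Let $m=x_{i_1}x_{i_2}\cdots x_{i_s}$ be a squarefree monomial of $S=k[x_1,\dots,x_n]$ with $i_1<i_2<\dots<i_s$, and let $B=\mathrm{sfBorel}(m)$. Then \[B^{\vee}=\mathrm{sfBorel}\big(x_1x_2\cdots x_{i_1},\; x_2x_3\cdots x_{i_2},\;\dots,\; x_sx_{s+1}\cdots x_{i_s}\big).\]
   Context: For monomials $m_1=x_{a_1}\cdots x_{a_r}$, $m_2=x_{b_1}\cdots x_{b_t}$ in factored form (indices weakly increasing), $m_1$ precedes $m_2$ in the Borel order if $r\ge t$ and $a_j\le b_j$ for $j\le t$. For a set $T$ of squarefree monomials, $\mathrm{sfBorel}(T)$ is the ideal generated by all squarefree monomials that precede some element of $T$ in the Borel order (the smallest squarefree Borel ideal containing $T$). For a squarefree monomial $u$, $P_u$ is the prime ideal generated by the variables dividing $u$. The Alexander dual of a squarefree monomial ideal $I$ with minimal monomial generators $u_1,\dots,u_t$ is $I^{\vee}=P_{u_1}\cap\dots\cap P_{u_t}$. *)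

(* Defs.v *)
(* Monomial ideals of S = k[x_1,...,x_n] are encoded by the
   set of monomials they contain (a monomial ideal is determined by its
   monomials).  Variable x_{i+1} corresponds to i : 'I_n (0-based). *)
From mathcomp Require Import all_boot.
Set Implicit Arguments. Unset Strict Implicit. Unset Printing Implicit Defensive.

Definition mono (n : nat) := {ffun 'I_n -> nat}.

Definition mdiv n (a b : mono n) : bool := [forall i, a i <= b i].

Definition mideal n := mono n -> Prop.

Definition ideal_gen n (G : mono n -> Prop) : mideal n :=
  fun w => exists g, G g /\ mdiv g w.

Definition sqm n (A : {set 'I_n}) : mono n := [ffun i => nat_of_bool (i \in A)].

(* factored form: increasing list of (0-based) indices of the variables *)
Definition idxs n (A : {set 'I_n}) : seq nat := [seq val i | i <- enum A].

Definition borel_prec n (A B : {set 'I_n}) : bool :=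
  (size (idxs B) <= size (idxs A)) &&
  all (fun j => nth 0 (idxs A) j <= nth 0 (idxs B) j) (iota 0 (size (idxs B))).

Definition sfBorel n (T : {set 'I_n} -> Prop) : mideal n :=
  ideal_gen (fun g => exists A, g = sqm A /\ exists t, T t /\ borel_prec A t).

Definition mingen n (I : mideal n) (u : mono n) : Prop :=
  I u /\ forall v, I v -> mdiv v u -> v = u.

Definition Pvar n (u : mono n) : mideal n :=
  fun w => exists i, 0 < u i /\ 0 < w i.

Definition adual n (I : mideal n) : mideal n :=
  fun w => forall u, mingen I u -> Pvar u w.

(* the squarefree monomial x_{j+1} x_{j+2} ... x_{ij+1} (0-based: {j..ij}) *)
Definition interval_set n (j ij : nat) : {set 'I_n} :=
  [set k : 'I_n | (j <= val k) && (val k <= ij)].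

(* Main.v *)
Require Import Defs.
From mathcomp Require Import all_boot.
Set Implicit Arguments. Unset Strict Implicit. Unset Printing Implicit Defensive.

Lemma enum_filt n (A : {set 'I_n}) : enum A = [seq x <- enum 'I_n | x \in A].
Proof.
rewrite /enum_mem -filter_predI; apply: eq_filter => x /=.
by rewrite /= andbT.
Qed.

Lemma idxs_sorted n (A : {set 'I_n}) : sorted ltn (idxs A).
Proof.
rewrite /idxs sorted_map enum_filt; apply: sorted_filter.
  by move=> x y z /= ; apply: ltn_trans.
by rewrite -sorted_map val_enum_ord iota_ltn_sorted.
Qed.

Lemma mem_idxs n (A : {set 'I_n}) (i : 'I_n) : (val i \in idxs A) = (i \in A).
Proof. rewrite /idxs mem_map ?mem_enum //; exact: val_inj. Qed.

Lemma idxs_lt n (A : {set 'I_n}) x : x \in idxs A -> x < n.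
Proof. rewrite /idxs; case/mapP=> i _ ->; exact: ltn_ord. Qed.

Definition cnt n (A : {set 'I_n}) x :=
  count (fun i : 'I_n => (i \in A) && (val i <= x)) (enum 'I_n).

Lemma cntE n (A : {set 'I_n}) x :
  count (fun i => i <= x) (idxs A) = cnt A x.
Proof.
rewrite /idxs count_map enum_filt count_filter /cnt; apply: eq_count => i /=.
by rewrite andbC.
Qed.

Lemma cnt_sub n (A B : {set 'I_n}) x y : A \subset B -> x <= y -> cnt A x <= cnt B y.
Proof.
move=> /subsetP AB xy; apply: sub_count => i /= /andP[iA ix].
by rewrite AB //= (leq_trans ix xy).
Qed.

Lemma count_iota_le x k : count (fun i => i <= x) (iota 0 k) = minn k x.+1.
Proof.
elim: k => [|k IH]; first by rewrite minnC.
rewrite -addn1 iotaD count_cat IH /= add0n addn0.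
case: (leqP k x) => kx.
  rewrite !(minn_idPl _) ?addn1 //; exact: ltnW.
rewrite addn0 !(minn_idPr _) // ?addn1; try exact: ltnW.
Qed.

Lemma cntC n (A : {set 'I_n}) x : x < n -> cnt A x + cnt (~: A) x = x.+1.
Proof.
move=> xn; rewrite /cnt.
have -> : x.+1 = count (fun i : 'I_n => val i <= x) (enum 'I_n).
  by rewrite -(count_map val (fun i => i <= x)) val_enum_ord count_iota_le (minn_idPr _).
elim: (enum 'I_n) => [|i s IH] //=.
rewrite in_setC -IH; case: (i \in A); case: (val i <= x) => /=; rewrite ?addnS ?add0n ?addn0 //.
Qed.

Lemma nth_le_count (s : seq nat) k x : sorted ltn s -> k < size s ->
  (nth 0 s k <= x) = (k < count (fun i => i <= x) s).
Proof.
elim: s k => [|a s IH] k //= srt.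
have srt' : sorted ltn s by apply: (path_sorted srt).
have allgt : all (fun y => a < y) s.
  by apply: (order_path_min ltn_trans srt).
have c0 : a <= x = false -> count (fun i => i <= x) s = 0.
  move=> ax; apply/eqP; rewrite -leqn0 leqNgt -has_count; apply/hasP => -[y ys yx].
  move/allP: allgt => /(_ y ys) ay.
  by move: ax; rewrite (leq_trans (ltnW ay) yx).
case: k => [|k] /= ks.
  by case ax: (a <= x) => //=; rewrite c0.
rewrite IH //; case ax: (a <= x) => /=; first by rewrite add1n.
by rewrite c0.
Qed.

Lemma path_nth_ge b (s : seq nat) k : path ltn b s -> k < size s -> b + k < nth 0 s k.
Proof.
elim: s b k => [|a s IH] b k //= /andP[ba pth].
case: k => [|k] ks; first by rewrite addn0.
have := IH a k pth ks; rewrite addnS; apply: leq_trans.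
by rewrite ltnS ltn_add2r.
Qed.

Lemma sorted_nth_ge (s : seq nat) k : sorted ltn s -> k < size s -> k <= nth 0 s k.
Proof.
case: s => [|a s] //= pth; case: k => [|k] //= ks.
by have := path_nth_ge pth ks; apply: leq_trans; rewrite ltnS leq_addl.
Qed.

Lemma idxs_interval n j ij : j <= ij -> ij < n ->
  idxs (interval_set n j ij) = iota j (ij - j).+1.
Proof.
move=> jij ijn; apply: (irr_sorted_eq ltn_trans ltnn (idxs_sorted _) (iota_ltn_sorted _ _)).
move=> x; rewrite mem_iota.
case xn: (x < n); last first.
  apply/idP/idP; first by move/idxs_lt; rewrite xn.
  case/andP=> _; rewrite addnS subnKC // ltnS => h.
  by move: xn; rewrite (leq_ltn_trans h ijn).
have -> : x = val (Ordinal xn) by [].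
rewrite mem_idxs /interval_set inE /=.
by rewrite addnS subnKC // ltnS.
Qed.

Lemma prec_count n (A B : {set 'I_n}) :
  borel_prec A B <-> (size (idxs B) <= size (idxs A) /\
    forall k, k < size (idxs B) -> k < cnt A (nth 0 (idxs B) k)).
Proof.
rewrite /borel_prec; split.
  case/andP=> sz /allP H; split=> // k ks.
  have := H k; rewrite mem_iota add0n ks => /(_ isT).
  by rewrite nth_le_count ?idxs_sorted ?cntE // (leq_trans ks sz).
case=> sz H; rewrite sz /=; apply/allP=> k; rewrite mem_iota add0n => ks.
by rewrite nth_le_count ?idxs_sorted ?cntE ?H // (leq_trans ks sz).
Qed.

Lemma cnt_size n (A : {set 'I_n}) x : cnt A x <= size (idxs A).
Proof. by rewrite -cntE count_size. Qed.

Lemma a_facts n (m : {set 'I_n}) k : k < size (idxs m) ->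
  nth 0 (idxs m) k < n /\ k <= nth 0 (idxs m) k.
Proof.
move=> ks; split; first by apply: idxs_lt; apply: mem_nth.
exact: sorted_nth_ge (idxs_sorted m) ks.
Qed.

Lemma Q_to_P n (m W C A : {set 'I_n}) j : j < size (idxs m) -> C \subset W ->
  borel_prec C (interval_set n j (nth 0 (idxs m) j)) -> borel_prec A m ->
  exists i, (i \in A) /\ (i \in W).
Proof.
move=> js CW /prec_count [_ HC] /prec_count [_ HA].
have [xn jx] := a_facts js.
set x := nth 0 (idxs m) j in xn jx HC HA.
rewrite idxs_interval // size_iota in HC.
have h1 := HC (x - j) (ltnSn _).
rewrite nth_iota // subnKC // in h1.
have h2 := HA j js; rewrite -/x in h2.
case: (boolP [exists i, (i \in A) && (i \in W)]).
  by case/existsP=> i /andP[iA iW]; exists i.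
rewrite negb_exists => /forallP nAW.
have AW : A \subset ~: W.
  apply/subsetP=> i iA; rewrite in_setC; have := nAW i; by rewrite iA.
have := cntC W xn.
have c1 := cnt_sub AW (leqnn x); have c2 := cnt_sub CW (leqnn x).
have : (x - j).+1 + j.+1 <= cnt C x + cnt A x by apply: leq_add.
rewrite addSn addnS subnK // => h3 h4.
have : x.+1 < x.+1.
  apply: (leq_trans h3); rewrite -h4; exact: leq_add.
by rewrite ltnn.
Qed.

Lemma P_to_Q n (m W : {set 'I_n}) :
  (forall A, borel_prec A m -> exists i, (i \in A) /\ (i \in W)) ->
  exists2 j, j < size (idxs m) & borel_prec W (interval_set n j (nth 0 (idxs m) j)).
Proof.
move=> P.
case: (boolP (all (fun k => k < cnt (~: W) (nth 0 (idxs m) k)) (iota 0 (size (idxs m))))) => H.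
  have : borel_prec (~: W) m.
    apply/prec_count; split; last first.
      by move=> k ks; apply: (allP H); rewrite mem_iota add0n.
    case e: (size (idxs m)) => [|s] //.
    have := allP H s; rewrite mem_iota add0n e ltnSn => /(_ isT) h.
    exact: leq_trans h (cnt_size _ _).
  by case/P=> i []; rewrite in_setC => /negbTE ->.
move: H; rewrite -has_predC => /hasP [k]; rewrite mem_iota add0n /= -leqNgt => ks hk.
exists k => //.
have [xn kx] := a_facts ks.
set x := nth 0 (idxs m) k in xn kx hk *.
apply/prec_count; rewrite idxs_interval // size_iota.
have gen : forall l, l < (x - k).+1 -> l < cnt W (nth 0 (iota k (x - k).+1) l).
  move=> l lt; rewrite nth_iota //.
  have lx : k + l <= x by rewrite -(subnKC kx) leq_add2l -ltnS.
  have := cntC W (leq_ltn_trans lx xn).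
  have := cnt_sub (subxx (~: W)) lx => c h.
  have : (k + l).+1 <= cnt W (k + l) + k.
    rewrite -h leq_add2l; exact: leq_trans c hk.
  move=> h'; rewrite -(leq_add2r k); move: h'; by rewrite addSn addnC.
split=> //.
have := gen (x - k) (ltnSn _) => h.
exact: leq_trans h (cnt_size _ _).
Qed.

From Stdlib Require Import Classical.

Lemma mdiv_refl n (v : mono n) : mdiv v v.
Proof. by apply/forallP=> i. Qed.

Lemma mdiv_trans n (a b c : mono n) : mdiv a b -> mdiv b c -> mdiv a c.
Proof.
move=> /forallP ab /forallP bc; apply/forallP=> i; exact: leq_trans (ab i) (bc i).
Qed.

Lemma sum_lt n (a b : mono n) : mdiv a b -> a <> b ->
  \sum_i a i < \sum_i b i.
Proof.
move=> /forallP ab neq.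
have [i lt] : exists i, a i < b i.
  apply: NNPP => H; apply: neq; apply/ffunP=> i; apply/eqP; rewrite eqn_leq ab /=.
  by rewrite leqNgt; apply/negP=> h; apply: H; exists i.
rewrite (bigD1 i) //= [X in _ < X](bigD1 i) //= -addSn.
apply: leq_add => //; apply: leq_sum => j _; exact: ab.
Qed.

Lemma descent n (I : mideal n) v : I v -> exists u, mingen I u /\ mdiv u v.
Proof.
move: {2}(\sum_i v i) (leqnn (\sum_i v i)) => N.
elim: N v => [|N IH] v hv Iv.
  exists v; split; last exact: mdiv_refl.
  split=> // v' Iv' dv; apply: NNPP => ne.
  by have := sum_lt dv ne; rewrite ltnNge (leq_trans hv (leq0n _)).
case: (classic (forall v', I v' -> mdiv v' v -> v' = v)) => H.
  by exists v; split; [split | exact: mdiv_refl].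
have [v' [Iv' [dv ne]]] : exists v', I v' /\ mdiv v' v /\ v' <> v.
  apply: NNPP => H'; apply: H => v' Iv' dv; apply: NNPP => ne.
  by apply: H'; exists v'.
have lt := sum_lt dv ne.
have [u [mu du]] := IH v' (leq_trans lt hv) Iv'.
by exists u; split=> //; apply: mdiv_trans du dv.
Qed.

Lemma mdiv_sqm n (A : {set 'I_n}) (w : mono n) :
  mdiv (sqm A) w = (A \subset [set i | 0 < w i]).
Proof.
apply/forallP/subsetP.
  move=> H i iA; rewrite inE; have := H i; by rewrite ffunE iA.
move=> H i; rewrite ffunE; case iA: (i \in A) => //=.
by have := H i iA; rewrite inE.
Qed.

Theorem theorem3p18 (n : nat) (m : {set 'I_n}) :
  forall w : mono n,
    adual (sfBorel (fun t => t = m)) w <->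
    sfBorel (fun t => exists2 j, j < size (idxs m) &
                        t = interval_set n j (nth 0 (idxs m) j)) w.
Proof.
move=> w; set W := [set i | 0 < w i]; split.
  move=> Hd.
  have P : forall A, borel_prec A m -> exists i, (i \in A) /\ (i \in W).
    move=> A pA.
    have BA : sfBorel (fun t => t = m) (sqm A).
      exists (sqm A); split; last exact: mdiv_refl.
      by exists A; split=> //; exists m.
    have [u [mu /forallP du]] := descent BA.
    have [i [ui wi]] := Hd u mu.
    exists i; split; last by rewrite inE.
    have := du i; rewrite ffunE; case: (i \in A) => //=.
    by rewrite leqNgt ui.
  have [j js pj] := P_to_Q P.
  exists (sqm W); split; last by rewrite mdiv_sqm subxx.
  exists W; split=> //; exists (interval_set n j (nth 0 (idxs m) j)); split=> //.
  by exists j.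
case=> g [[C [-> [t [[j js ->] pC]]]]]; rewrite mdiv_sqm => CW.
move=> u [[g' [[A [-> [t' [-> pA]]]] /forallP dA]] _].
have [i [iA iW]] := Q_to_P js CW pC pA.
exists i; split; last by move: iW; rewrite inE.
by have := dA i; rewrite ffunE iA.
Qed.
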